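(* Let $\alpha\in(0,1)$, $\gamma>0$, $\delta>0$, $\lambda>0$, $\epsilon>0$, let $(\bar y,\bar C)$ be an optimal solution of the LP, and let ALG be run on it. For every task $T_{i,j}$, let $\bar E_{i,j}=\sum_{s\in\mathcal V}\sum_{t=0}^u\bar y_{i,j,s,t}|I_t|s^\beta$ and let $E_{i,j}=v_{i,j}s_{i,j}^{\beta-1}$ be the energy consumed by $T_{i,j}$ in the schedule of ALG. Then $$E_{i,j}\le\frac{1}{\gamma^{\beta-1}\alpha^{\beta}}\,\bar E_{i,j}.$$
   Context: Problem MR. Jobs $\mathcal J=\{1,\dots,n\}$, processors $\mathcal P=\{1,\dots,m\}$. Job $j$ has weight $w_j>0$, release date $r_j\ge0$, and a nonempty set of Map tasks and a nonempty set of Reduce tasks, preassigned to processors with at most one task of each job per processor; $T_{i,j}$ is the task of job $j$ on processor $i$, with work $v_{i,j}\ge0$; $\mathcal T,\mathcal M,\mathcal R$ are the sets of all, Map, Reduce tasks. Running a task at speed $s$ for time $v/s$ uses energy $v s^{\beta-1}$ ($\beta>1$ fixed); $E>0$ is the energy budget. Notation: $w_{\min},w_{\max}$ min/max weights, $r_{\max}=\max_j r_j$, $v_{\max}=\max v_{i,j}$, $v_{\min}=\min\{v_{i,j}:v_{i,j}>0\}$, $t_{\max}=\frac{w_{\max}}{w_{\min}}\big(nr_{\max}+n(n+1)(|\mathcal T|v_{\max}^\beta/E)^{1/(\beta-1)}\big)$, $s_L=v_{\min}/t_{\max}$, $s_U=(E/v_{\min})^{1/(\beta-1)}$, $k=\lceil\log_{1+\epsilon}(s_U/s_L)\rceil$,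 $\mathcal V=\{s_L(1+\epsilon)^\ell:0\le\ell\le k\}$. LP: let $u$ be the least integer with $\lambda(1+\delta)^{u-1}\ge t_{\max}$, $\tau_0=0$, $\tau_t=\lambda(1+\delta)^{t-1}$ ($1\le t\le u+1$), $I_t=(\tau_t,\tau_{t+1}]$ of length $|I_t|$, $p_{i,j,s}=v_{i,j}/s$. Variables $y_{i,j,s,t},C_{i,j},C_j\ge0$. Minimize $\sum_jw_jC_j$ s.t. (1) $\sum_s\sum_{t=0}^u y_{i,j,s,t}|I_t|/p_{i,j,s}=1$ for all tasks; (2) $\sum_{j}\sum_s y_{i,j,s,t}\le1$ for all $i,t$; (3) $C_{i,j}\ge\frac12\sum_s y_{i,j,s,0}|I_0|(\frac1{p_{i,j,s}}+1)+\sum_{t=1}^u\sum_s(\frac{y_{i,j,s,t}|I_t|}{p_{i,j,s}}\tau_t+\frac12y_{i,j,s,t}|I_t|)$; (4) $C_j\ge C_{i,j}$; (5) $\sum_{T_{i,j}}\sum_s\sum_t y_{i,j,s,t}|I_t|s^\beta\le E$; (6) for $T_{i,j}\in\mathcal M$, $T_{i',j}\in\mathcal R$, $0\le\ell\le u$: $\sum_{t=0}^\ell\sum_s\frac{y_{i,j,s,t}|I_t|}{p_{i,j,s}}\ge\sum_{t=0}^\ell\sum_s\frac{y_{i',j,s,t}|I_t|}{p_{i',j,s}}$; (7) $y_{i,j,s,t}=0$ whenever $\tau_t<r_j$. Algorithm ALG (parameters $\alpha,\gamma$): from $\bar y$, the $\alpha$-point of a task is $t^\alpha_{i,j}=\min\{\ell:\sum_{t=0}^\ell\sum_s\bar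 y_{i,j,s,t}|I_t|/p_{i,j,s}\ge\alpha\}$, its processing time is $p_{i,j}=\gamma\sum_{t=0}^{t^\alpha_{i,j}}\sum_s\bar y_{i,j,s,t}|I_t|$ and its speed is $s_{i,j}=v_{i,j}/p_{i,j}$ (the tasks are then list-scheduled by $\alpha$-point on their processors). *)

(* Defs.v *)
From HB Require Import structures.
From mathcomp Require Import all_boot all_order all_algebra.
From mathcomp Require Import all_classical all_reals all_analysis.
Unset Printing Implicit Defensive.
Import Order.TTheory GRing.Theory Num.Theory.
Local Open Scope ring_scope.

(* Jobs are 'I_nJ, processors 'I_nP.
   isMap i j / isRed i j : job j has a Map / Reduce task on processor i.
   work i j = v_{i,j}, beta = energy exponent, En = energy budget E. *)
Record MRInst (R : realType) := MkMR {
  nJ : nat; nP : nat;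
  wt : 'I_nJ -> R; rel : 'I_nJ -> R;
  isMap : 'I_nP -> 'I_nJ -> bool; isRed : 'I_nP -> 'I_nJ -> bool;
  work : 'I_nP -> 'I_nJ -> R;
  beta : R; En : R }.
Arguments isMap {R m} _ _.
Arguments isRed {R m} _ _.

Section MR.
Variable R : realType.
Variable I : MRInst R.
Local Notation n := (@nJ R I).
Local Notation m := (@nP R I).
Local Notation w := (@wt R I).
Local Notation r := (@rel R I).
Local Notation v := (@work R I).
Local Notation beta := (@beta R I).
Local Notation E := (@En R I).

Definition isTask (i : 'I_m) (j : 'I_n) : bool := isMap i j || isRed i j.

Definition valid_instance : Prop :=
  (0 < n)%N /\
  (forall j, 0 < w j) /\
  (forall j, 0 <= r j) /\
  (forall (i : 'I_m) (j : 'I_n), ~~ (isMap i j && isRed i j)) /\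
  (forall j : 'I_n, exists i : 'I_m, isMap i j) /\
  (forall j : 'I_n, exists i : 'I_m, isRed i j) /\
  (forall i j, isTask i j -> 0 < v i j) /\
  1 < beta /\ 0 < E.

Definition ntasks : nat := #|[set x : 'I_m * 'I_n | isTask x.1 x.2]|.
Definition wmax : R := \big[Num.max/0]_(j < n) w j.
Definition wmin : R := \big[Num.min/wmax]_(j < n) w j.
Definition rmax : R := \big[Num.max/0]_(j < n) r j.
Definition vmax : R := \big[Num.max/0]_(i < m) \big[Num.max/0]_(j < n | isTask i j) v i j.
Definition vmin : R :=
  \big[Num.min/vmax]_(i < m) \big[Num.min/vmax]_(j < n | isTask i j && (0 < v i j)) v i j.

Definition tmax : R :=
  wmax / wmin * (n%:R * rmax +
     n%:R * (n%:R + 1) * powR (ntasks%:R * powR vmax beta / E) (1 / (beta - 1))).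
Definition sL : R := vmin / tmax.
Definition sU : R := powR (E / vmin) (1 / (beta - 1)).

Section Params.
Variables eps delta lambda : R.

Definition kk : int := Num.ceil (ln (sU / sL) / ln (1 + eps)).
(* the speeds of V are speed l, l < nspeeds, i.e. l = 0..k *)
Definition nspeeds : nat := if kk < 0 then 0%N else (absz kk).+1.
Definition speed (l : nat) : R := sL * (1 + eps) ^+ l.

(* tau_0 = 0, tau_t = lambda (1+delta)^(t-1) for t >= 1; |I_t| = tau_{t+1} - tau_t *)
Definition tau (t : nat) : R :=
  if t is t'.+1 then lambda * (1 + delta) ^+ t' else 0.
Definition len (t : nat) : R := tau t.+1 - tau t.

Definition is_u (u : nat) : Prop :=
  tmax <= lambda * powR (1 + delta) (u%:R - 1) /\
  forall u' : nat, tmax <= lambda * powR (1 + delta) (u'%:R - 1) -> (u <= u')%N.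

Variable u : nat.

Definition LPvar := 'I_m -> 'I_n -> nat -> nat -> R.

(* y_{i,j,s,t} |I_t| / p_{i,j,s} with p_{i,j,s} = v_{i,j}/s, s = speed l *)
Definition frac (y : LPvar) i j l t : R := y i j l t * len t / (v i j / speed l).
Definition cum (y : LPvar) i j (L : nat) : R :=
  \sum_(l < nspeeds) \sum_(t < L.+1) frac y i j l t.

Definition LP_feasible (y : LPvar) (Ct : 'I_m -> 'I_n -> R) (C : 'I_n -> R) : Prop :=
  (forall i j (l t : nat), isTask i j -> (l < nspeeds)%N -> (t <= u)%N -> 0 <= y i j l t) /\
      (forall i j, isTask i j -> 0 <= Ct i j) /\ (forall j, 0 <= C j) /\
      (forall i j, isTask i j -> cum y i j u = 1) /\
      (forall i (t : nat), (t <= u)%N ->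
         \sum_(j < n | isTask i j) \sum_(l < nspeeds) y i j l t <= 1) /\
      (forall i j, isTask i j ->
         Ct i j >= 2^-1 * (\sum_(l < nspeeds) y i j l 0%N * len 0%N * ((v i j / speed l)^-1 + 1))
                   + \sum_(1 <= t < u.+1) \sum_(l < nspeeds)
                       (frac y i j l t * tau t + 2^-1 * (y i j l t * len t))) /\
      (forall i j, isTask i j -> C j >= Ct i j) /\
      (\sum_(i < m) \sum_(j < n | isTask i j) \sum_(l < nspeeds) \sum_(t < u.+1)
          y i j l t * len t * powR (speed l) beta <= E) /\
      (forall (i i' : 'I_m) (j : 'I_n), isMap i j -> isRed i' j -> forall L : nat, (L <= u)%N ->
          cum y i j L >= cum y i' j L) /\
      (forall i j (l t : nat), isTask i j -> (l < nspeeds)%N -> (t <= u)%N ->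
          tau t < r j -> y i j l t = 0).

Definition LP_obj (C : 'I_n -> R) : R := \sum_(j < n) w j * C j.

Definition LP_optimal y Ct C : Prop :=
  LP_feasible y Ct C /\
  forall y' Ct' C', LP_feasible y' Ct' C' -> LP_obj C <= LP_obj C'.

Variables alpha gamma : R.

Definition alpha_point (y : LPvar) i j : nat :=
  find (fun L => alpha <= cum y i j L) (iota 0 u.+1).
Definition alg_ptime (y : LPvar) i j : R :=
  gamma * \sum_(l < nspeeds) \sum_(t < (alpha_point y i j).+1) y i j l t * len t.
Definition alg_speed (y : LPvar) i j : R := v i j / alg_ptime y i j.
Definition alg_energy (y : LPvar) i j : R := v i j * powR (alg_speed y i j) (beta - 1).
Definition LP_energy (y : LPvar) i j : R :=
  \sum_(l < nspeeds) \sum_(t < u.+1) y i j l t * len t * powR (speed l) beta.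

End Params.
End MR.

(* Main.v *)
Require Import Defs.
From HB Require Import structures.
From mathcomp Require Import all_boot all_order all_algebra.
From mathcomp Require Import all_classical all_reals all_analysis.
From mathcomp Require Import ring lra.
Import Order.TTheory GRing.Theory Num.Theory.
Local Open Scope ring_scope.

Lemma tangent (R : realType) (b c s : R) : 1 < b -> 0 <= c ->
  b * s * powR c (b - 1) - (b - 1) * powR c b <= powR s b.
Proof.
move=> b1 c0.
have b0 : 0 < b by apply: lt_trans b1.
have b10 : 0 < b - 1 by rewrite subr_gt0.
have [s0|s0] := ltP s 0.
  apply: le_trans (powR_ge0 _ _).
  rewrite subr_le0; apply: le_trans (_ : 0 <= _); last first.
    by rewrite mulr_ge0 ?powR_ge0 ?ltW.
  by rewrite -mulrA pmulr_rle0 // nmulr_rle0 // powR_ge0.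
pose q := b / (b - 1).
have q0 : 0 < q by rewrite divr_gt0.
have pq : b^-1 + q^-1 = 1.
  rewrite /q invf_div; field; rewrite ?gt_eqF //; fail.
have := conjugate_powR s0 (powR_ge0 c (b - 1)) b0 q0 pq.
rewrite -powRrM /q mulrCA mulfV ?gt_eqF // mulr1 => H.
rewrite invf_div in H.
have e : s `^ b / b + c `^ b * ((b - 1) / b) = (s `^ b + (b-1) * c `^ b) / b.
  by field; rewrite gt_eqF.
rewrite e ler_pdivlMr // in H.
rewrite lerBlDr; apply: le_trans H; by rewrite -mulrA mulrC.
Qed.

Lemma len_ge0 (R : realType) (I : MRInst R) (delta lambda : R) t :
  0 < delta -> 0 < lambda -> 0 <= len R delta lambda t.
Proof.
move=> d0 l0; rewrite /len /tau; case: t => [|t].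
  by rewrite expr0 mulr1 subr0 ltW.
rewrite subr_ge0 ler_pM2l // exprS ler_peMl ?exprn_ge0 ?ltW ?addr_gt0 //.
by rewrite ltrDl.
Qed.

Theorem lemma3 (R : realType) (I : MRInst R) (alpha gamma delta lambda eps : R)
    (u : nat) (y : 'I_(nP R I) -> 'I_(nJ R I) -> nat -> nat -> R)
    (Ct : 'I_(nP R I) -> 'I_(nJ R I) -> R) (C : 'I_(nJ R I) -> R) :
  valid_instance R I ->
  0 < alpha < 1 -> 0 < gamma -> 0 < delta -> 0 < lambda -> 0 < eps ->
  is_u R I delta lambda u ->
  LP_optimal R I eps delta lambda u y Ct C ->
  forall (i : 'I_(nP R I)) (j : 'I_(nJ R I)), isTask R I i j ->
    alg_energy R I eps delta lambda u alpha gamma y i j <=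
    LP_energy R I eps delta lambda u y i j /
      (powR gamma (beta R I - 1) * powR alpha (beta R I)).
Proof.
move=> [_ [_ [_ [_ [_ [_ [vpos [b1 E0]]]]]]]] /andP[a0 a1] g0 d0 l0 e0 _.
move=> [[yge0 [_ [_ [cum1 _]]]] _] i j ij.
have b0 : 0 < beta R I by apply: lt_trans b1.
have v0 : 0 < work R I i j := vpos i j ij.
set bb := beta R I in b1 b0 *.
set v := work R I i j in v0 *.
set Q := fun L => alpha <= cum R I eps delta lambda y i j L.
have hs : has Q (iota 0 u.+1).
  apply/hasP; exists u; first by rewrite mem_iota add0n leqnn.
  by rewrite /Q cum1 // ltW.
have au : (alpha_point R I eps delta lambda u alpha y i j < u.+1)%N.
  by move: hs; rewrite has_find size_iota.
have acum : alpha <= cum R I eps delta lambda y i j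
                 (alpha_point R I eps delta lambda u alpha y i j).
  by have := nth_find 0%N hs; rewrite nth_iota -?has_find // ?size_iota // add0n.
set a := alpha_point R I eps delta lambda u alpha y i j in au acum *.
set s := speed R I eps.
set ln_ := len R delta lambda.
have xge0 : forall (l : 'I_(nspeeds R I eps)) t, (t < u.+1)%N -> 0 <= y i j l t * ln_ t.
  by move=> l t tu; rewrite mulr_ge0 ?len_ge0 // yge0.
set P := \sum_(l < nspeeds R I eps) \sum_(t < a.+1) y i j l t * ln_ t.
have P0 : 0 <= P.
  rewrite sumr_ge0 // => l _; rewrite sumr_ge0 // => t _.
  by apply: xge0; apply: leq_trans au.
have LPE0 : 0 <= LP_energy R I eps delta lambda u y i j.
  rewrite sumr_ge0 // => l _; rewrite sumr_ge0 // => t _.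
  by rewrite mulr_ge0 ?powR_ge0 ?xge0.
have ptE : alg_ptime R I eps delta lambda u alpha gamma y i j = gamma * P by [].
have [P00|Ppos] := eqVneq P 0.
  rewrite /alg_energy /alg_speed ptE P00 mulr0 invr0 mulr0 powR0 ?mulr0.
    by rewrite divr_ge0 // mulr_ge0 ?powR_ge0.
  by rewrite subr_eq0 gt_eqF.
have P1 : 0 < P by rewrite lt_def Ppos P0.
rewrite ler_pdivlMr ?mulr_gt0 ?powR_gt0 //.
set c := alpha * v / P.
have c0 : 0 <= c by rewrite divr_ge0 // mulr_ge0 // ltW.
set B := powR c (bb - 1).
have B0 : 0 <= B by apply: powR_ge0.
have eqL : alg_energy R I eps delta lambda u alpha gamma y i j *
    (powR gamma (bb - 1) * powR alpha bb) = alpha * v * B.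
  rewrite /alg_energy /alg_speed ptE -/bb -/v.
  rewrite -(mulr_powRB1 (ltW a0) b0).
  have -> : B = powR (v / (gamma * P)) (bb - 1) * powR gamma (bb - 1) * powR alpha (bb - 1).
    have e : v / (gamma * P) * gamma * alpha = c by rewrite /c; field; rewrite ?gt_eqF.
    rewrite -!powRM ?e //.
    all: try by rewrite ?mulr_ge0 ?divr_ge0 ?invr_ge0 ?mulr_ge0 ?ltW.
  by ring.
rewrite eqL.
have W : \sum_(l < nspeeds R I eps) \sum_(t < a.+1) y i j l t * ln_ t * powR (s l) bb
    <= LP_energy R I eps delta lambda u y i j.
  apply: ler_sum => l _.
  rewrite (big_ord_widen u.+1 (fun t => y i j l t * ln_ t * powR (s l) bb) au).
  rewrite [X in _ <= X](bigID (fun t : 'I_u.+1 => (t < a.+1)%N)) /= lerDl.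
  by rewrite sumr_ge0 // => t _; rewrite mulr_ge0 ?powR_ge0 ?xge0.
apply: le_trans W.
have T : \sum_(l < nspeeds R I eps) \sum_(t < a.+1)
     y i j l t * ln_ t * (bb * s l * B - (bb - 1) * powR c bb)
  <= \sum_(l < nspeeds R I eps) \sum_(t < a.+1) y i j l t * ln_ t * powR (s l) bb.
  apply: ler_sum => l _; apply: ler_sum => t _.
  apply: ler_wpM2l; last exact: tangent.
  by apply: xge0; apply: leq_trans (ltn_ord t) au.
apply: le_trans T.
have -> : \sum_(l < nspeeds R I eps) \sum_(t < a.+1)
     y i j l t * ln_ t * (bb * s l * B - (bb - 1) * powR c bb)
   = (bb * B * v) * cum R I eps delta lambda y i j a - (bb - 1) * powR c bb * P.
  rewrite /cum /P !mulr_sumr -sumrB; apply: eq_bigr => l _.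
  rewrite !mulr_sumr -sumrB; apply: eq_bigr => t _.
  rewrite /Defs.frac invf_div -/ln_ -/s -/v; by field; rewrite gt_eqF.
have cB : c `^ bb = c * B by rewrite /B mulr_powRB1.
rewrite cB.
have -> : (bb - 1) * (c * B) * P = (bb - 1) * B * (c * P) by ring.
have -> : c * P = alpha * v by rewrite /c; field; rewrite gt_eqF.
have -> : alpha * v * B = bb * B * v * alpha - (bb - 1) * B * (alpha * v) by ring.
by rewrite lerD2r ler_wpM2l //; apply: mulr_ge0 (mulr_ge0 (ltW b0) B0) (ltW v0).
Qed.
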